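(* For each $n\ge 3$, let $\mathcal D_n$ be the algebra with carrier $\{0,1,\dots,n\}$, constant $0$, and operation defined by: $x\cdot y=\max\{x-y,0\}$ for $x,y\in\{0,\dots,n-1\}$; $n\cdot 0=n$; $n\cdot k=n-k-1$ for $k\in\{1,\dots,n-2\}$; $n\cdot(n-1)=1$; and $k\cdot n=0$ for all $k\in\{0,1,\dots,n\}$. Then $\mathcal D_n$ is a BCK-algebra, and it is not commutative (indeed $(n-1)\wedge n=n-2\neq n-1=n\wedge(n-1)$).
   Context: A BCK-algebra is a set $A$ with a binary operation $\cdot$ and a constant $0$ such that for all $x,y,z\in A$: (BCK1) $((x\cdot y)\cdot(x\cdot z))\cdot(z\cdot y)=0$; (BCK2) $(x\cdot(x\cdot y))\cdot y=0$; (BCK3) $x\cdot x=0$; (BCK4) $0\cdot x=0$; (BCK5) $x\cdot y=0$ and $y\cdot x=0$ imply $x=y$. Define $x\wedge y:=y\cdot(y\cdot x)$; the algebra is commutative if $x\wedge y=y\wedge x$ for all $x,y$. *)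

(* Defs.v *)
From mathcomp Require Import all_boot.
Set Implicit Arguments. Unset Strict Implicit. Unset Printing Implicit Defensive.

Definition is_BCK (A : Type) (mul : A -> A -> A) (z : A) : Prop :=
  (forall x y w : A, mul (mul (mul x y) (mul x w)) (mul w y) = z) /\
  (forall x y : A, mul (mul x (mul x y)) y = z) /\
  (forall x : A, mul x x = z) /\
  (forall x : A, mul z x = z) /\
  (forall x y : A, mul x y = z -> mul y x = z -> x = y).

Definition bck_meet (A : Type) (mul : A -> A -> A) (x y : A) : A := mul y (mul y x).

Definition is_commutative_BCK (A : Type) (mul : A -> A -> A) : Prop :=
  forall x y : A, bck_meet mul x y = bck_meet mul y x.

Definition Dn_nat (n x y : nat) : nat :=
  if y == n then 0
  else if x < n then x - y
  else if y == 0 then n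
  else if y == n.-1 then 1
  else n - y - 1.

(* The algebra D_n with carrier 'I_n.+1 = {0,...,n}; the value of x . y is
   Dn_nat n x y, truncated into 'I_n.+1 (truncation is a no-op for n >= 1). *)

Definition Dn_op (n : nat) (x y : 'I_n.+1) : 'I_n.+1 :=
  inord (Dn_nat n (val x) (val y)).

Definition Dn_zero (n : nat) : 'I_n.+1 := ord0.

(* Main.v *)
Require Import Defs.
From mathcomp Require Import all_boot.
From mathcomp Require Import zify.

Lemma Dn_spec n x y : 3 <= n -> x <= n -> y <= n ->
  let r := Dn_nat n x y in
  r <= n /\
  ((y = n /\ r = 0) \/ (y <> n /\ x < n /\ r = x - y) \/
   (y <> n /\ x = n /\ y = 0 /\ r = n) \/
   (y <> n /\ x = n /\ y <> 0 /\ y = n - 1 /\ r = 1) \/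
   (y <> n /\ x = n /\ y <> 0 /\ y <> n - 1 /\ r = n - y - 1)).
Proof.
move=> Hn Hx Hy /=; rewrite /Dn_nat.
case: eqP => [->|H1]; first lia.
case: ifP => H2; first lia.
case: eqP => H3; first lia.
case: eqP => H4; lia.
Qed.

Lemma val_op n (x y : 'I_n.+1) : 3 <= n -> val (Dn_op x y) = Dn_nat n x y.
Proof.
move=> Hn; rewrite /Dn_op; apply: inordK.
have := @Dn_spec n x y Hn (ltn_ord x : x <= n) (ltn_ord y : y <= n); move=> /= [H _]; lia.
Qed.

Ltac sp n Hn a b :=
  let H := fresh in
  have H := @Dn_spec n a b Hn ltac:(lia) ltac:(lia); simpl in H;
  move: H; set (Dn_nat n a b); move=> [? [[? ?]|[[? [? ?]]|[[? [? [? ?]]]|[[? [? [? [? ?]]]]|[? [? [? [? ?]]]]]]]]];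
  try (exfalso; lia).

Theorem mainTheorem6 (n : nat) (Hn : 3 <= n) :
  is_BCK (@Dn_op n) (Dn_zero n) /\
  ~ is_commutative_BCK (@Dn_op n) /\
  val (bck_meet (@Dn_op n) (inord n.-1) (inord n)) = n - 2 /\
  val (bck_meet (@Dn_op n) (inord n) (inord n.-1)) = n.-1 /\
  n - 2 <> n.-1.
Proof.
have vn : val (inord n : 'I_n.+1) = n by apply: inordK.
have vn1 : val (inord n.-1 : 'I_n.+1) = n.-1 by apply: inordK; lia.
have M1 : val (bck_meet (@Dn_op n) (inord n.-1) (inord n)) = n - 2.
  rewrite /bck_meet !val_op // vn vn1.
  sp n Hn n n.-1; sp n Hn n n0; lia.
have M2 : val (bck_meet (@Dn_op n) (inord n) (inord n.-1)) = n.-1.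
  rewrite /bck_meet !val_op // vn vn1.
  sp n Hn n.-1 n; sp n Hn n.-1 n0; lia.
split; last first.
  split; last by split=> //; split=> //; lia.
  move=> C; have := C (inord n.-1) (inord n). move/(congr1 val). lia.
have Z : forall a : 'I_n.+1, val a = 0 -> a = Dn_zero n.
  by move=> a Ha; apply: val_inj.
split.
  move=> x y w; apply: Z; rewrite !val_op //.
  have Hx := ltn_ord x; have Hy := ltn_ord y; have Hw := ltn_ord w.
  sp n Hn x y; sp n Hn x w; sp n Hn w y;
  sp n Hn n0 n1; sp n Hn n3 n2; lia.
split.
  move=> x y; apply: Z; rewrite !val_op //.
  have Hx := ltn_ord x; have Hy := ltn_ord y.
  sp n Hn x y; sp n Hn x n0; sp n Hn n1 y; lia.
split.
  move=> x; apply: Z; rewrite !val_op //.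
  have Hx := ltn_ord x; sp n Hn x x; lia.
split.
  move=> x; apply: Z; rewrite !val_op //=.
  have Hx := ltn_ord x; sp n Hn 0 x; lia.
move=> x y Hxy Hyx.
have A : Dn_nat n x y = 0 by rewrite -val_op // Hxy.
have B : Dn_nat n y x = 0 by rewrite -val_op // Hyx.
apply: ord_inj.
have Hx := ltn_ord x; have Hy := ltn_ord y.
move: A B; sp n Hn x y; sp n Hn y x; lia.
Qed.
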